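(* Let $\partial_1,\partial_2$ be nonzero homogeneous locally nilpotent derivations of fiber type on $A$. Then $\partial_1+\partial_2$ is locally nilpotent if and only if $[\partial_1,\partial_2]$ is locally nilpotent.
   Context: Let $\mathbf k$ be an algebraically closed field of characteristic zero, $\mathbb T\cong(\mathbf k^\times)^n$ an algebraic torus with character lattice $M$. Let $X$ be a normal affine variety with an effective $\mathbb T$-action, $A=\mathbf k[X]$ with the induced $M$-grading $A=\bigoplus_{m\in M}A_m\chi^m$, $A_m\subseteq\mathbf k(X)^{\mathbb T}$, $K=\operatorname{Frac}A$. A derivation $\partial$ of $A$ is homogeneous of degree $e\in M$ if $\partial(A_m\chi^m)\subseteq A_{m+e}\chi^{m+e}$ for all $m$; it is locally nilpotent if every element of $A$ is killed by some power of $\partial$; a homogeneous locally nilpotent derivation is of fiber type if its unique extension to $K$ annihilates $\mathbf k(X)^{\mathbb T}$. *)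

(* Defs.v *)
From HB Require Import structures.
From mathcomp Require Import all_boot all_order all_algebra.
From mathcomp Require Import fraction.
Set Implicit Arguments. Unset Strict Implicit. Unset Printing Implicit Defensive.
Import Order.TTheory GRing.Theory Num.Theory.
Local Open Scope ring_scope.

(* The character lattice M of an n-dimensional torus: M = Z^n. *)
Notation lattice n := ('rV[int]_n).

Section Defs.
Variables (k : fieldType) (A : idomainType) (phi : {rmorphism k -> A}).

Definition fin_gen_alg : Prop :=
  exists s : seq A, forall a : A,
    exists r : seq (k * seq 'I_(size s)),
      a = \sum_(cl <- r) phi cl.1 * \prod_(i <- cl.2) s`_i.

Definition normal_domain : Prop :=
  forall x : {fraction A},
    (exists2 p : {poly A}, p \is monic & root (map_poly (@tofrac A) p) x) ->
    exists a : A, x = @tofrac A a.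

(* An M-grading A = (+)_m A_m, given by the family of projections
   pi m : A -> A_m (so A_m = { a | pi m a = a }). *)
Definition is_grading n (pi : lattice n -> A -> A) : Prop :=
  [/\ (forall m a b, pi m (a + b) = pi m a + pi m b),
      (forall m c a, pi m (phi c * a) = phi c * pi m a),
      (forall m m' a, pi m (pi m' a) = if m == m' then pi m' a else 0),
      (forall a, exists2 s : seq (lattice n), uniq s &
          (forall m, m \notin s -> pi m a = 0) /\ a = \sum_(m <- s) pi m a) &
      (forall m1 m2 a b, pi m1 a = a -> pi m2 b = b ->
          pi (m1 + m2) (a * b) = a * b)].

Definition homogeneous n (pi : lattice n -> A -> A) (m : lattice n) (a : A) :=
  pi m a = a.

(* The torus action is effective: the weights m with A_m <> 0 generate M. *)
Definition effective_grading n (pi : lattice n -> A -> A) : Prop :=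
  forall m : lattice n, exists r : seq (int * lattice n),
    (forall zw, zw \in r -> exists a, pi zw.2 a != 0) /\
    m = \sum_(zw <- r) zw.2 *~ zw.1.

Definition is_derivation (D : A -> A) : Prop :=
  [/\ (forall a b, D (a + b) = D a + D b),
      (forall c a, D (phi c * a) = phi c * D a) &
      (forall a b, D (a * b) = D a * b + a * D b)].

Definition locally_nilpotent (D : A -> A) : Prop :=
  forall a, exists N : nat, iter N D a = 0.

Definition homogeneous_der n (pi : lattice n -> A -> A) (e : lattice n)
    (D : A -> A) : Prop :=
  forall m a, homogeneous pi m a -> homogeneous pi (m + e) (D a).

(* Fiber type: the extension of D to K = Frac A (given by
   D(f/g) = (D f * g - f * D g)/g^2) kills k(X)^T, the field of invariant
   rational functions, i.e. the quotients f/g of homogeneous f, g of the same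
   degree (g <> 0). *)
Definition fiber_type n (pi : lattice n -> A -> A) (D : A -> A) : Prop :=
  (exists e, homogeneous_der pi e D) /\ locally_nilpotent D /\
  forall m f g, homogeneous pi m f -> homogeneous pi m g -> g != 0 ->
    D f * g - f * D g = 0.

Definition der_add (D1 D2 : A -> A) : A -> A := fun a => D1 a + D2 a.
Definition der_bracket (D1 D2 : A -> A) : A -> A :=
  fun a => D1 (D2 a) - D2 (D1 a).

End Defs.

(* Main.v *)
Require Import Defs.
From HB Require Import structures.
From mathcomp Require Import all_boot all_order all_algebra.
From mathcomp Require Import fraction.
From mathcomp Require Import zify ring.
Import Order.TTheory GRing.Theory Num.Theory.
Set Implicit Arguments. Unset Strict Implicit. Unset Printing Implicit Defensive.
Local Open Scope ring_scope.
Section Grading.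
Variables (k : fieldType) (A : idomainType) (phi : {rmorphism k -> A}).
Variables (n : nat) (pi : lattice n -> A -> A).
Hypothesis hgr : is_grading phi pi.
Hypothesis hchar : [pchar k] =i pred0.
Local Notation K := {fraction A}.
Local Notation "x %:F" := (@tofrac A x).

Definition hom m x := pi m x = x.

Lemma piD m x y : pi m (x + y) = pi m x + pi m y.
Proof. by case: hgr. Qed.
Lemma pi0 m : pi m 0 = 0.
Proof. have h := piD m 0 0; rewrite addr0 in h.
by apply: (addrI (pi m 0)); rewrite addr0 -h. Qed.
Lemma piN m x : pi m (- x) = - pi m x.
Proof. by apply/eqP; rewrite -addr_eq0 -piD addNr pi0. Qed.
Lemma pi_sum m (I : Type) (s : seq I) (F : I -> A) :
  pi m (\sum_(i <- s) F i) = \sum_(i <- s) pi m (F i).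
Proof. exact: (big_morph _ (piD m) (pi0 m)). Qed.
Lemma hom0 m : hom m 0. Proof. exact: pi0. Qed.
Lemma homD m x y : hom m x -> hom m y -> hom m (x + y).
Proof. by rewrite /hom piD => -> ->. Qed.
Lemma homN m x : hom m x -> hom m (- x).
Proof. by rewrite /hom piN => ->. Qed.
Lemma homM m1 m2 x y : hom m1 x -> hom m2 y -> hom (m1 + m2) (x * y).
Proof. by case: hgr => _ _ _ _ h; apply: h. Qed.
Lemma pi_hom m m' x : hom m' x -> pi m x = if m == m' then x else 0.
Proof. by case: hgr => _ _ h _ _ hx; rewrite -hx h hx. Qed.
Lemma hom_pi m x : hom m (pi m x).
Proof. by case: hgr => _ _ h _ _; rewrite /hom h eqxx. Qed.
Lemma decomp x : exists s : seq (lattice n), x = \sum_(m <- s) pi m x.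
Proof. by case: hgr => _ _ _ h _; case: (h x) => s _ [_ hx]; exists s. Qed.
Lemma hom_uniq m m' x : hom m x -> hom m' x -> x != 0 -> m = m'.
Proof. move=> hm hm' nz; apply/eqP; apply: contraNT nz => ne.
by rewrite -hm (pi_hom m hm') (negbTE ne). Qed.

Section Op.
Variable T : A -> A.
Hypothesis Tadd : forall x y, T (x + y) = T x + T y.
Lemma T0 : T 0 = 0.
Proof. have h := Tadd 0 0; rewrite addr0 in h.
by apply: (addrI (T 0)); rewrite addr0 -h. Qed.
Lemma iterT0 N : iter N T 0 = 0.
Proof. by elim: N => //= N ->; rewrite T0. Qed.
Lemma iterTD N x y : iter N T (x + y) = iter N T x + iter N T y.
Proof. by elim: N => //= N ->; rewrite Tadd. Qed.
Lemma iterT_sum N (I : Type) (s : seq I) (F : I -> A) :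
  iter N T (\sum_(i <- s) F i) = \sum_(i <- s) iter N T (F i).
Proof. exact: (big_morph _ (iterTD N) (iterT0 N)). Qed.
Lemma iterT_after N M x : iter N T x = 0 -> iter (M + N) T x = 0.
Proof. by move=> h; rewrite iterD h iterT0. Qed.

Lemma lnd_of_hom : (forall m x, hom m x -> exists N, iter N T x = 0) ->
  locally_nilpotent T.
Proof.
move=> H x; have [s ->] := decomp x.
elim: s => [|m s [N IH]]; first by exists 0%N; rewrite big_nil.
have [M hM] := H m (pi m x) (hom_pi m x).
exists (maxn N M); rewrite big_cons iterTD.
have h1 : iter (maxn N M) T (\sum_(j <- s) pi j x) = 0.
  by rewrite -(subnK (leq_maxl N M)); apply: iterT_after.
have h2 : iter (maxn N M) T (pi m x) = 0.
  by rewrite -(subnK (leq_maxr N M)); apply: iterT_after.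
by rewrite h1 h2 addr0.
Qed.

Lemma lnd_potential (B : A -> nat) :
  (forall m x, hom m x -> x != 0 -> exists y z, T x = y + z /\
     (y = 0 \/ exists m', [/\ hom m' y, y != 0 & (B y < B x)%N]) /\
     (z = 0 \/ exists m', [/\ hom m' z, z != 0 & (B z < B x)%N])) ->
  locally_nilpotent T.
Proof.
move=> H; apply: lnd_of_hom => m x hx; exists (B x).+1.
suff H' : forall N m x, hom m x -> (B x < N)%N -> iter N T x = 0.
  exact: (H' _ m x hx (ltnSn _)).
elim=> [//|N IH] {}m {}x {}hx hB.
have [->|nz] := eqVneq x 0; first exact: iterT0.
rewrite iterSr; have [y [z [-> [hy hz]]]] := H m x hx nz.
rewrite iterTD; suff [-> ->] : iter N T y = 0 /\ iter N T z = 0 by rewrite addr0.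
split.
  case: hy => [->|[m' [h1 h2 h3]]]; first exact: iterT0.
  by apply: (IH m') => //; apply: leq_trans h3 _.
case: hz => [->|[m' [h1 h2 h3]]]; first exact: iterT0.
by apply: (IH m') => //; apply: leq_trans h3 _.
Qed.
End Op.

Lemma natK_eq0 (N : nat) : ((N%:R : K) == 0) = (N == 0%N).
Proof.
rewrite -(rmorph_nat (@tofrac A)) tofrac_eq0 -(rmorph_nat phi) fmorph_eq0.
by move/pcharf0P: hchar => ->.
Qed.
Lemma natK_inj (N M : nat) : (N%:R : K) = M%:R -> N = M.
Proof.
wlog le : N M / (N <= M)%N.
  by move=> W h; case: (leqP N M) => [l|/ltnW l]; [apply: W | symmetry; apply: W].
move=> h; rewrite -(subnK le) natrD in h.
have /eqP : ((M - N)%N%:R : K) = 0 by apply: (addIr (N%:R)); rewrite add0r.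
by rewrite natK_eq0 subn_eq0 => h2; apply/eqP; rewrite eqn_leq le h2.
Qed.

Section One.
Variables (D : A -> A) (e : lattice n).
Hypothesis hD : is_derivation phi D.
Hypothesis hDhom : homogeneous_der pi e D.
Hypothesis hfib : forall m f g, homogeneous pi m f -> homogeneous pi m g ->
  g != 0 -> D f * g - f * D g = 0.

Lemma Dadd x y : D (x + y) = D x + D y. Proof. by case: hD. Qed.
Lemma DM x y : D (x * y) = D x * y + x * D y. Proof. by case: hD. Qed.
Lemma D0 : D 0 = 0. Proof. exact: T0 Dadd. Qed.
Lemma hom_D m x : hom m x -> hom (m + e) (D x). Proof. exact: hDhom. Qed.
Lemma hom_iter m x j : hom m x -> hom (m + e *+ j) (iter j D x).
Proof.
move=> hx; elim: j => [|j IH]; first by rewrite mulr0n addr0.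
by rewrite iterS mulrSr addrA; apply: hom_D.
Qed.

Definition R x : K := (D x)%:F / x%:F.

Lemma R_mul x y : x != 0 -> y != 0 -> R (x * y) = R x + R y.
Proof.
move=> hx hy; rewrite /R DM tofracD !tofracM.
have hx' : x%:F != 0 by rewrite tofrac_eq0.
have hy' : y%:F != 0 by rewrite tofrac_eq0.
by rewrite addf_div // [_ * x%:F]mulrC.
Qed.

Lemma R_same m x y : hom m x -> hom m y -> x != 0 -> y != 0 -> R x = R y.
Proof.
move=> hx hy nx ny; have /eqP := hfib hx hy ny.
rewrite subr_eq0 => /eqP h.
have hx' : x%:F != 0 by rewrite tofrac_eq0.
have hy' : y%:F != 0 by rewrite tofrac_eq0.
rewrite /R; apply/eqP; rewrite eqr_div // -!tofracM; apply/eqP; congr (_%:F).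
by rewrite h mulrC.
Qed.

Lemma R_bal m1 m2 m3 m4 x1 x2 x3 x4 :
  hom m1 x1 -> hom m2 x2 -> hom m3 x3 -> hom m4 x4 -> m1 + m2 = m3 + m4 ->
  x1 != 0 -> x2 != 0 -> x3 != 0 -> x4 != 0 -> R x1 + R x2 = R x3 + R x4.
Proof.
move=> h1 h2 h3 h4 hm n1 n2 n3 n4.
rewrite -!R_mul //; apply: (R_same (m := m1 + m2)); first exact: homM.
  by rewrite hm; apply: homM.
by rewrite mulf_neq0.
by rewrite mulf_neq0.
Qed.

Section Ref.
Hypothesis hlnd : locally_nilpotent D.
Variables (u : A) (mu : lattice n).
Hypothesis hu : hom mu u.
Hypothesis hDu : D u != 0.

Lemma u_neq0 : u != 0.
Proof. by apply/eqP => u0; move: hDu; rewrite u0 D0 eqxx. Qed.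

Definition c := R u - R (D u).

Lemma exP x : exists N, iter N D x == 0.
Proof. by have [N hN] := hlnd x; exists N; apply/eqP. Qed.

Definition nu x := (ex_minn (exP x)).-1.

Lemma R_Dx m x : hom m x -> x != 0 -> D x != 0 -> R (D x) = R x - c.
Proof.
move=> hx nx nDx; rewrite /c.
have hm : m + e + mu = m + (mu + e) by rewrite addrAC -addrA.
have h := R_bal (hom_D hx) hu hx (hom_D hu) hm nDx u_neq0 nx hDu.
by apply: (addIr (R u)); rewrite h opprB addrA subrK.
Qed.

Lemma R_iter m x j : hom m x -> iter j D x != 0 -> R (iter j D x) = R x - j%:R * c.
Proof.
move=> hx; elim: j => [|j IH]; first by rewrite mul0r subr0.
move=> nz; have nz' : iter j D x != 0.
  by apply: contraNneq nz; rewrite iterS => ->; rewrite D0.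
rewrite iterS (R_Dx (hom_iter _ hx) nz' nz) IH //.
by rewrite mulrSr mulrDl mul1r [in RHS]opprD [in RHS]addrA.
Qed.

Lemma nuP m x : hom m x -> x != 0 -> R x = (nu x)%:R * c.
Proof.
move=> hx nx; rewrite /nu; case: ex_minnP => N /eqP hN hmin.
case: N hN hmin => [/=|N] hN hmin; first by rewrite hN eqxx in nx.
have nz : iter N D x != 0.
  by apply/negP => /(hmin N); rewrite ltnn.
have := R_iter hx nz; rewrite /R -iterS hN tofrac0 mul0r /= => h.
by apply/eqP; rewrite -subr_eq0 -h; rewrite /R.
Qed.

Lemma Dx_nu m x : hom m x -> (D x)%:F = (nu x)%:R * c * x%:F.
Proof.
move=> hx; have [->|nx] := eqVneq x 0; first by rewrite D0 tofrac0 mulr0.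
have hx' : x%:F != 0 by rewrite tofrac_eq0.
by rewrite -(nuP hx nx) /R divfK.
Qed.

Lemma c_neq0 : c != 0.
Proof.
apply: contraNneq hDu => c0; rewrite -tofrac_eq0 (Dx_nu hu) c0.
by rewrite mulr0 mul0r.
Qed.

Lemma D_eq0 m x : hom m x -> x != 0 -> (D x == 0) = (nu x == 0%N).
Proof.
move=> hx nx; rewrite -tofrac_eq0 (Dx_nu hx) !mulf_eq0 natK_eq0.
by rewrite (negbTE c_neq0) tofrac_eq0 (negbTE nx) !orbF.
Qed.

Lemma nu_bal m1 m2 m3 m4 x1 x2 x3 x4 :
  hom m1 x1 -> hom m2 x2 -> hom m3 x3 -> hom m4 x4 -> m1 + m2 = m3 + m4 ->
  x1 != 0 -> x2 != 0 -> x3 != 0 -> x4 != 0 ->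
  (nu x1 + nu x2 = nu x3 + nu x4)%N.
Proof.
move=> h1 h2 h3 h4 hm n1 n2 n3 n4.
have := R_bal h1 h2 h3 h4 hm n1 n2 n3 n4.
rewrite (nuP h1) // (nuP h2) // (nuP h3) // (nuP h4) // -!mulrDl -!natrD.
by move/(mulIf c_neq0)/natK_inj.
Qed.

Lemma nu_same m x y : hom m x -> hom m y -> x != 0 -> y != 0 -> nu x = nu y.
Proof.
move=> hx hy nx ny.
have := nu_bal hx hu hy hu erefl nx u_neq0 ny u_neq0.
by move/eqP; rewrite eqn_add2r => /eqP.
Qed.

Lemma nu_D m x : hom m x -> D x != 0 -> nu x = (nu (D x)).+1.
Proof.
move=> hx nDx; have nx : x != 0 by apply: contraNneq nDx => ->; rewrite D0.
have := R_Dx hx nx nDx; rewrite (nuP (hom_D hx)) // (nuP hx) //.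
move=> h; apply: natK_inj; rewrite -addn1 natrD; apply: (mulIf c_neq0).
by rewrite mulrDl h mul1r subrK.
Qed.

Lemma nu_pos m x : hom m x -> D x != 0 -> (0 < nu x)%N.
Proof. by move=> hx nDx; rewrite (nu_D hx nDx). Qed.
End Ref.
End One.

Section Pair.
Variables (D1 D2 : A -> A) (e1 e2 : lattice n).
Hypothesis hD1 : is_derivation phi D1.
Hypothesis hD2 : is_derivation phi D2.
Hypothesis hh1 : homogeneous_der pi e1 D1.
Hypothesis hh2 : homogeneous_der pi e2 D2.
Hypothesis fib1 : forall m f g, homogeneous pi m f -> homogeneous pi m g ->
  g != 0 -> D1 f * g - f * D1 g = 0.
Hypothesis fib2 : forall m f g, homogeneous pi m f -> homogeneous pi m g ->
  g != 0 -> D2 f * g - f * D2 g = 0.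
Hypothesis lnd1 : locally_nilpotent D1.
Hypothesis lnd2 : locally_nilpotent D2.
Variables (u1 u2 : A) (mu1 mu2 : lattice n).
Hypothesis hu1 : hom mu1 u1.
Hypothesis hu2 : hom mu2 u2.
Hypothesis hDu1 : D1 u1 != 0.
Hypothesis hDu2 : D2 u2 != 0.

Local Notation nu1 := (nu lnd1).
Local Notation nu2 := (nu lnd2).
Local Notation c1 := (c D1 u1).
Local Notation c2 := (c D2 u2).

Lemma D1x m x : hom m x -> (D1 x)%:F = (nu1 x)%:R * c1 * x%:F.
Proof. exact: (Dx_nu hD1 hh1 fib1 lnd1 hu1 hDu1). Qed.
Lemma D2x m x : hom m x -> (D2 x)%:F = (nu2 x)%:R * c2 * x%:F.
Proof. exact: (Dx_nu hD2 hh2 fib2 lnd2 hu2 hDu2). Qed.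
Lemma c1_neq0 : c1 != 0. Proof. exact: (c_neq0 hD1 hh1 fib1 lnd1 hu1 hDu1). Qed.
Lemma c2_neq0 : c2 != 0. Proof. exact: (c_neq0 hD2 hh2 fib2 lnd2 hu2 hDu2). Qed.
Lemma D1_eq0 m x : hom m x -> x != 0 -> (D1 x == 0) = (nu1 x == 0%N).
Proof. exact: (D_eq0 hD1 hh1 fib1 lnd1 hu1 hDu1). Qed.
Lemma D2_eq0 m x : hom m x -> x != 0 -> (D2 x == 0) = (nu2 x == 0%N).
Proof. exact: (D_eq0 hD2 hh2 fib2 lnd2 hu2 hDu2). Qed.
Lemma nu1_same m x y : hom m x -> hom m y -> x != 0 -> y != 0 -> nu1 x = nu1 y.
Proof. exact: (nu_same hD1 hh1 fib1 lnd1 hu1 hDu1). Qed.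
Lemma nu2_same m x y : hom m x -> hom m y -> x != 0 -> y != 0 -> nu2 x = nu2 y.
Proof. exact: (nu_same hD2 hh2 fib2 lnd2 hu2 hDu2). Qed.
Lemma nu1_D1 m x : hom m x -> D1 x != 0 -> nu1 x = (nu1 (D1 x)).+1.
Proof. exact: (nu_D hD1 hh1 fib1 lnd1 hu1 hDu1). Qed.
Lemma nu2_D2 m x : hom m x -> D2 x != 0 -> nu2 x = (nu2 (D2 x)).+1.
Proof. exact: (nu_D hD2 hh2 fib2 lnd2 hu2 hDu2). Qed.
Lemma u1_neq0 : u1 != 0. Proof. exact: (u_neq0 hD1 hDu1). Qed.
Lemma u2_neq0 : u2 != 0. Proof. exact: (u_neq0 hD2 hDu2). Qed.
Lemma D1D0 : D1 0 = 0. Proof. exact: D0 hD1. Qed.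
Lemma D2D0 : D2 0 = 0. Proof. exact: D0 hD2. Qed.

Definition a : int := (nu1 (D2 u2))%:Z - (nu1 u2)%:Z.
Definition b : int := (nu2 (D1 u1))%:Z - (nu2 u1)%:Z.

Lemma nu1_D2 m x : hom m x -> x != 0 -> D2 x != 0 ->
  (nu1 (D2 x))%:Z = (nu1 x)%:Z + a.
Proof.
move=> hx nx nDx.
have hm : m + e2 + mu2 = m + (mu2 + e2) by rewrite addrAC -addrA.
have := nu_bal hD1 hh1 fib1 lnd1 hu1 hDu1 (hom_D hh2 hx) hu2 hx (hom_D hh2 hu2)
  hm nDx u2_neq0 nx hDu2.
rewrite /a; lia.
Qed.

Lemma nu2_D1 m x : hom m x -> x != 0 -> D1 x != 0 ->
  (nu2 (D1 x))%:Z = (nu2 x)%:Z + b.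
Proof.
move=> hx nx nDx.
have hm : m + e1 + mu1 = m + (mu1 + e1) by rewrite addrAC -addrA.
have := nu_bal hD2 hh2 fib2 lnd2 hu2 hDu2 (hom_D hh1 hx) hu1 hx (hom_D hh1 hu1)
  hm nDx u1_neq0 nx hDu1.
rewrite /b; lia.
Qed.

Lemma it1 j m x : hom m x -> x != 0 -> (j <= nu1 x)%N ->
  [/\ iter j D1 x != 0, hom (m + e1 *+ j) (iter j D1 x),
      (nu1 (iter j D1 x) + j)%N = nu1 x &
      (nu2 (iter j D1 x))%:Z = (nu2 x)%:Z + j%:Z * b].
Proof.
move=> hx nx; elim: j => [|j IH] hj.
  rewrite /=; split => //; [by rewrite mulr0n addr0 | lia | lia].
have [nz hy e1' e2'] := IH (ltnW hj).
have hy' := hom_iter hh1 j hx.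
have nD : D1 (iter j D1 x) != 0.
  rewrite (D1_eq0 hy' nz); lia.
have h1 := nu1_D1 hy' nD; have h2 := nu2_D1 hy' nz nD.
rewrite iterS; split => //.
- exact: hom_iter.
- lia.
- rewrite h2 e2'; nia.
Qed.

Lemma nu1_pos : (0 < nu1 u1)%N.
Proof. exact: (nu_pos hD1 hh1 fib1 lnd1 hu1 hDu1 hu1 hDu1). Qed.
Lemma nu2_pos : (0 < nu2 u2)%N.
Proof. exact: (nu_pos hD2 hh2 fib2 lnd2 hu2 hDu2 hu2 hDu2). Qed.

Lemma exist_y : 0 <= b -> exists m y, [/\ hom m y, y != 0, nu1 y = 0%N & (0 < nu2 y)%N].
Proof.
move=> hb; have [nz hy h1 h2] := it1 hu2 u2_neq0 (leqnn (nu1 u2)).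
exists (mu2 + e1 *+ nu1 u2), (iter (nu1 u2) D1 u2); split => //.
  lia.
have := nu2_pos; nia.
Qed.

Lemma b_a : 0 <= b -> 0 <= a.
Proof.
move=> hb; have [m [y [hy ny h1 h2]]] := exist_y hb.
have nD : D2 y != 0 by rewrite (D2_eq0 hy ny); lia.
have := nu1_D2 hy ny nD; rewrite h1; lia.
Qed.

Lemma b_neg m x : b < 0 -> hom m x -> x != 0 -> (nu1 x)%:Z * (- b) <= (nu2 x)%:Z.
Proof.
move=> hb hx nx; have [nz hy h1 h2] := it1 hx nx (leqnn (nu1 x)).
have : (0 <= (nu2 (iter (nu1 x) D1 x))%:Z) by [].
rewrite h2; nia.
Qed.

Lemma e_eq_a : e1 = e2 -> a = -1.
Proof.
move=> he.
have hm : mu2 + e2 + mu1 = mu2 + (mu1 + e1) by rewrite he addrAC -addrA.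
have := nu_bal hD1 hh1 fib1 lnd1 hu1 hDu1 (hom_D hh2 hu2) hu1 hu2 (hom_D hh1 hu1)
  hm hDu2 u1_neq0 u2_neq0 hDu1.
have := nu1_D1 hu1 hDu1.
rewrite /a; lia.
Qed.

Lemma Sadd x y : der_add D1 D2 (x + y) = der_add D1 D2 x + der_add D1 D2 y.
Proof. by rewrite /der_add (Dadd hD1) (Dadd hD2) addrACA. Qed.
Lemma Tadd x y : der_bracket D1 D2 (x + y) = der_bracket D1 D2 x + der_bracket D1 D2 y.
Proof.
rewrite /der_bracket (Dadd hD2) (Dadd hD1) (Dadd hD1) (Dadd hD2).
by rewrite opprD addrACA.
Qed.

Lemma br_lnd : a <= 0 -> locally_nilpotent (der_bracket D1 D2).
Proof.
move=> ha; apply: (lnd_potential Tadd (B := nu1)) => m x hx nx.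
exists (D1 (D2 x)), (- D2 (D1 x)); split; first by [].
split.
  have [->|nD2] := eqVneq (D2 x) 0; first by left; rewrite D1D0.
  have [h0|nz] := eqVneq (D1 (D2 x)) 0; first by left.
  right; exists (m + e2 + e1); split => //; first by apply: hom_D; apply: hom_D.
  have hx2 := hom_D hh2 hx.
  have := nu1_D1 hx2 nz; have := nu1_D2 hx nx nD2; lia.
have [h0|nz] := eqVneq (D2 (D1 x)) 0; first by left; rewrite h0 oppr0.
have nD1 : D1 x != 0 by apply: contraNneq nz => ->; rewrite D2D0.
right; exists (m + e1 + e2); split.
- by apply: homN; apply: hom_D; apply: hom_D.
- by rewrite oppr_eq0.
have hx1 := hom_D hh1 hx; have hw := hom_D hh2 hx1.
rewrite (nu1_same (homN hw) hw) ?oppr_eq0 //.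
have ne1 : D1 x != 0 := nD1.
have := nu1_D1 hx nD1; have := nu1_D2 hx1 nD1 nz; lia.
Qed.

Lemma sum_lndC : a = -1 -> locally_nilpotent (der_add D1 D2).
Proof.
move=> ha; apply: (lnd_potential Sadd (B := nu1)) => m x hx nx.
exists (D1 x), (D2 x); split; first by [].
split.
  have [h0|nz] := eqVneq (D1 x) 0; first by left.
  right; exists (m + e1); split => //; first exact: hom_D.
  have := nu1_D1 hx nz; lia.
have [h0|nz] := eqVneq (D2 x) 0; first by left.
right; exists (m + e2); split => //; first exact: hom_D.
have := nu1_D2 hx nx nz; lia.
Qed.

Lemma sum_lnd0 (bn : nat) : a = 0 -> b = bn%:Z -> locally_nilpotent (der_add D1 D2).
Proof.
move=> ha hb.
apply: (lnd_potential Sadd (B := fun x => nu1 x * bn.+1 + nu2 x)%N) => m x hx nx.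
exists (D1 x), (D2 x); split; first by [].
split.
  have [h0|nz] := eqVneq (D1 x) 0; first by left.
  right; exists (m + e1); split => //; first exact: hom_D.
  have := nu1_D1 hx nz; have := nu2_D1 hx nx nz; rewrite hb; nia.
have [h0|nz] := eqVneq (D2 x) 0; first by left.
right; exists (m + e2); split => //; first exact: hom_D.
have := nu1_D2 hx nx nz; have := nu2_D2 hx nz; rewrite ha; nia.
Qed.

Lemma T_formula m x : hom m x -> (der_bracket D1 D2 x)%:F =
  ((nu1 (D2 x) * nu2 x)%:R - (nu2 (D1 x) * nu1 x)%:R) * (c1 * c2) * x%:F.
Proof.
move=> hx; rewrite /der_bracket tofracB (D1x (hom_D hh2 hx)) (D2x (hom_D hh1 hx)).
rewrite (D1x hx) (D2x hx) !natrM.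
set p := (nu1 (D2 x))%:R; set q := (nu2 x)%:R; set r := (nu2 (D1 x))%:R.
set s := (nu1 x)%:R; set X := x%:F.
rewrite mulrBl mulrBl; congr (_ - _).
  by rewrite !mulrA [p * _ * q]mulrAC [p * q * c1]mulrAC.
by rewrite !mulrA [r * _ * s]mulrAC [r * s * c2]mulrAC mulrAC -!mulrA [c2 * (c1 * X)]mulrCA.
Qed.

Lemma L1 m x : hom m x -> x != 0 ->
  (nu1 (D2 x) * nu2 x)%N%:Z = ((nu1 x)%:Z + a) * (nu2 x)%:Z.
Proof.
move=> hx nx; have [h0|nz] := eqVneq (D2 x) 0.
  by move/eqP: h0; rewrite (D2_eq0 hx nx) => /eqP ->; rewrite muln0 mulr0.
have := nu1_D2 hx nx nz; lia.
Qed.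
Lemma L2 m x : hom m x -> x != 0 ->
  (nu2 (D1 x) * nu1 x)%N%:Z = ((nu2 x)%:Z + b) * (nu1 x)%:Z.
Proof.
move=> hx nx; have [h0|nz] := eqVneq (D1 x) 0.
  by move/eqP: h0; rewrite (D1_eq0 hx nx) => /eqP ->; rewrite muln0 mulr0.
have := nu2_D1 hx nx nz; lia.
Qed.

Definition qv x : int := a * (nu2 x)%:Z - b * (nu1 x)%:Z.

Lemma T_step m x : hom m x -> x != 0 -> 0 < qv x ->
  [/\ der_bracket D1 D2 x != 0, hom (m + e1 + e2) (der_bracket D1 D2 x) &
      qv (der_bracket D1 D2 x) = qv x + (b - a)].
Proof.
move=> hx nx hq.
have hT : hom (m + e1 + e2) (der_bracket D1 D2 x).
  apply: homD; last by apply: homN; do 2 apply: hom_D.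
  by rewrite addrAC; do 2 apply: hom_D.
have nT : der_bracket D1 D2 x != 0.
  apply/negP => /eqP h0; move: (T_formula hx); rewrite h0 tofrac0 => /esym/eqP.
  rewrite !mulf_eq0 (negbTE c1_neq0) (negbTE c2_neq0) tofrac_eq0 (negbTE nx).
  rewrite !orbF subr_eq0 => /eqP/natK_inj h.
  have := L1 hx nx; have := L2 hx nx; move: hq; rewrite /qv h; nia.
split => //.
have hw1 : hom (m + e1 + e2) (D1 (D2 x)) by rewrite addrAC; do 2 apply: hom_D.
have hw2 : hom (m + e1 + e2) (D2 (D1 x)) by do 2 apply: hom_D.
have [h1|n1] := eqVneq (D1 (D2 x)) 0.
  have n2 : D2 (D1 x) != 0.
    by apply: contraNneq nT; rewrite /der_bracket h1 => ->; rewrite subrr.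
  have nD1 : D1 x != 0 by apply: contraNneq n2 => ->; rewrite D2D0.
  have hx1 := hom_D hh1 hx.
  rewrite /qv (nu1_same hT hw2) // (nu2_same hT hw2) //.
  have := nu1_D1 hx nD1; have := nu1_D2 hx1 nD1 n2;
  have := nu2_D1 hx nx nD1; have := nu2_D2 hx1 n2; lia.
have nD2 : D2 x != 0 by apply: contraNneq n1 => ->; rewrite D1D0.
have hx2 := hom_D hh2 hx.
rewrite /qv (nu1_same hT hw1) // (nu2_same hT hw1) //.
have := nu1_D2 hx nx nD2; have := nu1_D1 hx2 n1;
have := nu2_D2 hx nD2; have := nu2_D1 hx2 nD2 n1; lia.
Qed.

Lemma br_not_lnd : 0 < a -> a <= b -> ~ locally_nilpotent (der_bracket D1 D2).
Proof.
move=> ha hab hl; have [m [y [hy ny h1 h2]]] := exist_y (le_trans (ltW ha) hab).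
have hq : 0 < qv y by rewrite /qv h1; nia.
suff H : forall N m x, hom m x -> x != 0 -> 0 < qv x -> iter N (der_bracket D1 D2) x != 0.
  by have [N hN] := hl y; move: (H N m y hy ny hq); rewrite hN eqxx.
elim=> [|N IH] m0 x hx nx hqx //=.
rewrite -iterS iterSr; have [nT hT eq] := T_step hx nx hqx.
by apply: (IH _ _ hT nT); rewrite eq; lia.
Qed.

Fixpoint W (N i : nat) : A :=
  match N with
  | 0 => if i == 0%N then u1 else 0
  | N'.+1 => (if i is i'.+1 then D1 (W N' i') else 0) + D2 (W N' i)
  end.

Lemma W_big N i : (N < i)%N -> W N i = 0.
Proof.
elim: N i => [|N IH] [|i] //= hi.
by rewrite !IH // ?D1D0 ?D2D0 ?addr0 // ltnW.
Qed.

Definition dg N i := mu1 + e1 *+ i + e2 *+ (N - i).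

Lemma W_hom N i : (i <= N)%N -> hom (dg N i) (W N i).
Proof.
rewrite /dg; elim: N i => [|N IH] [|i] //=.
- by move=> _; rewrite !mulr0n !addr0.
- move=> _; rewrite addr0 subn0; apply: homD; first exact: hom0.
  have := hom_D hh2 (IH 0%N (leq0n _)); rewrite subn0 mulr0n addr0.
  by move=> h; rewrite mulrSr addrA.
- move=> hi; rewrite subSS; apply: homD.
    have := hom_D hh1 (IH i hi).
    by move=> h; rewrite mulrSr addrA [mu1 + e1 *+ i + e1 + _]addrAC.
  case: (ltnP N i.+1) => hN.
    by rewrite W_big // D2D0; apply: hom0.
  have := hom_D hh2 (IH i.+1 hN).
  have -> : (N - i = (N - i.+1).+1)%N by lia.
  by move=> h; rewrite [e2 *+ _.+1]mulrSr addrA.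
Qed.

Fixpoint P (N i : nat) : nat :=
  match N with
  | 0 => (i == 0%N)
  | N'.+1 => ((if i is i'.+1 then nu1 (W N' i') * P N' i' else 0) +
              nu2 (W N' i) * P N' i)%N
  end.

Definition X N i : K := c1 ^+ i * c2 ^+ (N - i) * u1%:F.

Lemma W_hom_any N i : exists m, hom m (W N i).
Proof.
case: (leqP i N) => h; first by exists (dg N i); apply: W_hom.
by exists 0; rewrite W_big //; apply: hom0.
Qed.

Lemma X_neq0 N i : X N i != 0.
Proof.
rewrite /X !mulf_neq0 ?expf_neq0 ?c1_neq0 ?c2_neq0 //.
by rewrite tofrac_eq0 u1_neq0.
Qed.

Lemma W_P N i : (W N i)%:F = (P N i)%:R * X N i.
Proof.
rewrite /X; elim: N i => [|N IH] [|i] /=.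
- by rewrite !expr0 !mul1r.
- by rewrite tofrac0 mul0r.
- rewrite add0n tofracD tofrac0 add0r.
  have [m hm] := W_hom_any N 0; rewrite (D2x hm) IH natrM !subn0 !expr0 !mul1r.
  by rewrite exprS !mulrA [_ * c2 * _]mulrAC [_ * _ * c2]mulrAC.
rewrite tofracD natrD mulrDl subSS.
have [m hm] := W_hom_any N i; have [m' hm'] := W_hom_any N i.+1.
rewrite (D1x hm) (D2x hm') !IH !natrM; congr (_ + _).
  by rewrite exprS !mulrA [_ * c1 * _]mulrAC [_ * _ * c1]mulrAC.
case: (ltnP N i.+1) => hN.
  have -> : P N i.+1 = 0%N.
    have := IH i.+1; rewrite W_big // tofrac0 => /esym/eqP.
    by rewrite mulf_eq0 natK_eq0 (negbTE (X_neq0 N i.+1)) orbF => /eqP.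
  by rewrite !mul0r !mulr0 !mul0r.
have -> : (N - i = (N - i.+1).+1)%N by lia.
by rewrite [c2 ^+ (_ - _).+1]exprS; ring.
Qed.


Lemma W_neq0 N i : (W N i != 0) = (P N i != 0%N).
Proof.
rewrite -tofrac_eq0 W_P mulf_eq0 (negbTE (X_neq0 N i)) orbF natK_eq0.
by [].
Qed.

Lemma P_ge1 N i : (nu1 (W N i) * P N i <= P N.+1 i.+1)%N.
Proof. by rewrite /=; lia. Qed.
Lemma P_ge2 N i : (nu2 (W N i) * P N i <= P N.+1 i)%N.
Proof. by case: i => [|i] /=; lia. Qed.

Lemma dg_step1 N i : (i <= N)%N -> dg N i + e1 = dg N.+1 i.+1.
Proof. by move=> _; rewrite /dg subSS mulrSr addrA [mu1 + e1 *+ i + e1 + _]addrAC. Qed.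
Lemma dg_step2 N i : (i <= N)%N -> dg N i + e2 = dg N.+1 i.
Proof. by move=> h; rewrite /dg subSn // mulrSr addrA. Qed.

Lemma walk : 0 < a -> 0 < b -> forall N, exists i, [/\ (i <= N)%N, W N i != 0 &
  (0 < nu1 (W N i) + nu2 (W N i))%N].
Proof.
move=> ha hb; elim=> [|N [i [hi nw hpos]]].
  by exists 0%N; split => //=; [exact: u1_neq0 | have := nu1_pos; lia].
have hw := W_hom hi; have nP : P N i != 0%N by rewrite -W_neq0.
case: (posnP (nu1 (W N i))) => h1.
  have h2 : (0 < nu2 (W N i))%N by lia.
  have nD : D2 (W N i) != 0 by rewrite (D2_eq0 hw nw); lia.
  have hP : P N.+1 i != 0%N.
    by have := P_ge2 N i; move: nP; rewrite -!lt0n => ? ?; apply: leq_trans _ ; [|eassumption]; rewrite muln_gt0 h2.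
  have nW : W N.+1 i != 0 by rewrite W_neq0.
  have hW := W_hom (leqW hi).
  have hDw : hom (dg N.+1 i) (D2 (W N i)) by rewrite -dg_step2 //; apply: hom_D.
  exists i; split => //; first exact: leqW.
  rewrite (nu1_same hW hDw nW nD) (nu2_same hW hDw nW nD).
  have := nu1_D2 hw nw nD; have := nu2_D2 hw nD; lia.
have nD : D1 (W N i) != 0 by rewrite (D1_eq0 hw nw); lia.
have hP : P N.+1 i.+1 != 0%N.
  by have := P_ge1 N i; move: nP; rewrite -!lt0n => ? ?; apply: leq_trans _ ; [|eassumption]; rewrite muln_gt0 h1.
have nW : W N.+1 i.+1 != 0 by rewrite W_neq0.
have hW := W_hom (hi : (i.+1 <= N.+1)%N).
have hDw : hom (dg N.+1 i.+1) (D1 (W N i)) by rewrite -dg_step1 //; apply: hom_D.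
exists i.+1; split => //.
rewrite (nu1_same hW hDw nW nD) (nu2_same hW hDw nW nD).
have := nu1_D1 hw nD; have := nu2_D1 hw nw nD; lia.
Qed.

Lemma W_sum N : iter N (der_add D1 D2) u1 = \sum_(i < N.+1) W N i.
Proof.
elim: N => [|N IH]; first by rewrite big_ord_recl big_ord0 /= addr0.
rewrite iterS IH (big_morph _ Sadd (T0 Sadd)).
have -> : \sum_(i < N.+2) W N.+1 i =
    \sum_(i < N.+1) D1 (W N i) + \sum_(i < N.+1) D2 (W N i).
  rewrite (eq_bigr (fun i : 'I_N.+2 =>
     (if val i is i'.+1 then D1 (W N i') else 0) + D2 (W N i))) // big_split /=.
  rewrite big_ord_recl /= add0r [X in _ + X = _]big_ord_recr /= W_big // D2D0 addr0.
  by [].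
by rewrite -big_split.
Qed.

Lemma torsion (v : lattice n) (d : nat) : v *+ d = 0 -> (0 < d)%N -> v = 0.
Proof.
move=> h hd; apply/matrixP => p q; have := congr1 (fun M : lattice n => M p q) h.
rewrite mulmxnE !mxE => /eqP; rewrite mulrn_eq0 => /orP [|/eqP //].
by move/eqP=> d0; rewrite d0 in hd.
Qed.

Lemma dg_inj N i j : e1 != e2 -> (i <= N)%N -> (j <= N)%N -> dg N i = dg N j -> i = j.
Proof.
move=> ne; wlog le : i j / (i <= j)%N.
  move=> W0 hi hj h; case: (leqP i j) => l; first exact: W0.
  by symmetry; apply: W0 => //; apply: ltnW.
move=> hi hj; have [d hd] : exists d, j = (i + d)%N by exists (j - i)%N; lia.
subst j.
rewrite /dg; have -> : (N - i = (N - (i + d)) + d)%N by lia.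
set r := (N - (i + d))%N => h.
have h2 : e2 *+ d = e1 *+ d.
  apply: (addrI (mu1 + e1 *+ i + e2 *+ r)).
  rewrite -[LHS]addrA -mulrnDr h mulrnDr addrA.
  by rewrite [mu1 + e1 *+ i + e1 *+ d + _]addrAC.
have : (e1 - e2) *+ d = 0 by rewrite mulrnBl h2 subrr.
case: (posnP d) => [->|hd /torsion -/(_ hd) /eqP]; first by rewrite addn0.
by rewrite subr_eq0 (negbTE ne).
Qed.

Lemma proj_W N i0 : e1 != e2 -> (i0 <= N)%N ->
  pi (dg N i0) (\sum_(i < N.+1) W N i) = W N i0.
Proof.
move=> ne hi0; rewrite (big_morph _ (piD _) (pi0 _)).
have hi0' : (i0 < N.+1)%N by [].
rewrite (bigD1 (Ordinal hi0')) //= (pi_hom _ (W_hom hi0)) eqxx big1 ?addr0 //.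
move=> j hj; have hjN : (j <= N)%N by rewrite -ltnS.
rewrite (pi_hom _ (W_hom hjN)); case: eqP => // h.
have e := dg_inj ne hi0 hjN h.
by case/negP: hj; apply/eqP/val_inj; rewrite /= e.
Qed.

Lemma sum_not_lnd : 0 < a -> 0 < b -> ~ locally_nilpotent (der_add D1 D2).
Proof.
move=> ha hb hl; have [N hN] := hl u1.
have ne : e1 != e2 by apply/eqP => /e_eq_a; lia.
have [i [hi nw _]] := walk ha hb N.
move: hN; rewrite W_sum => /(congr1 (pi (dg N i))); rewrite proj_W // pi0.
by move/eqP; rewrite (negbTE nw).
Qed.

Lemma summary :
  [/\ 0 <= b -> 0 <= a,
      (b < 0 -> forall m x, hom m x -> x != 0 -> (nu1 x)%:Z * (- b) <= (nu2 x)%:Z),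
      (a <= 0 -> locally_nilpotent (der_bracket D1 D2)),
      (a = -1 -> locally_nilpotent (der_add D1 D2)) &
   [/\ (forall bn : nat, a = 0 -> b = bn%:Z -> locally_nilpotent (der_add D1 D2)),
      (0 < a -> a <= b -> ~ locally_nilpotent (der_bracket D1 D2)),
      (0 < a -> 0 < b -> ~ locally_nilpotent (der_add D1 D2)),
      (0 < nu1 u1)%N & hom mu1 u1 /\ u1 != 0]].
Proof.
split.
- exact: b_a.
- by move=> hb m x; apply: b_neg.
- exact: br_lnd.
- exact: sum_lndC.
split.
- exact: sum_lnd0.
- exact: br_not_lnd.
- exact: sum_not_lnd.
- exact: nu1_pos.
- split; [exact: hu1 | exact: u1_neq0].
Qed.
End Pair.

Lemma lnd_ext (T1 T2 : A -> A) : T1 =1 T2 -> locally_nilpotent T1 -> locally_nilpotent T2.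
Proof. by move=> h hl x; have [N hN] := hl x; exists N; rewrite -(eq_iter h). Qed.

Lemma lnd_opp (T : A -> A) : (forall x y, T (x + y) = T x + T y) ->
  locally_nilpotent T -> locally_nilpotent (fun x => - T x).
Proof.
move=> Tadd hl x; have [N hN] := hl x; exists N.
have TN y : T (- y) = - T y.
  by apply/eqP; rewrite -addr_eq0 -Tadd addNr (T0 Tadd).
suff -> : iter N (fun x => - T x) x = if odd N then - iter N T x else iter N T x.
  by rewrite hN oppr0; case: ifP.
elim: N {hN} => //= N ->; case: (odd N) => /=; by rewrite ?TN ?opprK.
Qed.

Lemma final (D1 D2 : A -> A) (e1 e2 : lattice n)
  (hD1 : is_derivation phi D1) (hD2 : is_derivation phi D2)
  (hh1 : homogeneous_der pi e1 D1) (hh2 : homogeneous_der pi e2 D2)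
  (fib1 : forall m f g, homogeneous pi m f -> homogeneous pi m g ->
     g != 0 -> D1 f * g - f * D1 g = 0)
  (fib2 : forall m f g, homogeneous pi m f -> homogeneous pi m g ->
     g != 0 -> D2 f * g - f * D2 g = 0)
  (lnd1 : locally_nilpotent D1) (lnd2 : locally_nilpotent D2)
  (u1 u2 : A) (mu1 mu2 : lattice n) (hu1 : hom mu1 u1) (hu2 : hom mu2 u2)
  (hDu1 : D1 u1 != 0) (hDu2 : D2 u2 != 0) :
  locally_nilpotent (der_add D1 D2) <-> locally_nilpotent (der_bracket D1 D2).
Proof.
have [S1 S2 S3 S4 [S5 S6 S7 S8 [hu1' nu1']]] :=
  summary hD1 hD2 hh1 hh2 fib1 fib2 lnd1 lnd2 hu1 hu2 hDu1 hDu2.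
have [T1 T2 T3 T4 [T5 T6 T7 T8 _]] :=
  summary hD2 hD1 hh2 hh1 fib2 fib1 lnd2 lnd1 hu2 hu1 hDu2 hDu1.
set A0 := a D2 lnd1 u2 in S1 S2 S3 S4 S5 S6 S7.
set B0 := b D1 lnd2 u1 in S1 S2 S3 S4 S5 S6 S7.
have ea : a D1 lnd2 u1 = B0 by [].
have eb : b D2 lnd1 u2 = A0 by [].
rewrite ea eb in T1 T2 T3 T4 T5 T6 T7.
have addC : der_add D2 D1 =1 der_add D1 D2 by move=> x; rewrite /der_add addrC.
have brC : der_bracket D2 D1 =1 (fun x => - der_bracket D1 D2 x).
  by move=> x; rewrite /der_bracket opprB.
have brC' : der_bracket D1 D2 =1 (fun x => - der_bracket D2 D1 x).
  by move=> x; rewrite /der_bracket opprB.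
have caseneg : A0 < 0 -> locally_nilpotent (der_add D1 D2) /\
    locally_nilpotent (der_bracket D1 D2).
  move=> ha; have hb : B0 < 0.
    by case: (ltP B0 0) => // /S1; lia.
  have := S2 hb mu1 u1 hu1 nu1'; have := T2 ha mu1 u1 hu1 nu1'; move: S8.
  move=> h8 h1 h2; have e : A0 = -1 by nia.
  by split; [apply: S4 | apply: S3; rewrite e].
case: (ltP A0 0) => ha.
  by have [? ?] := caseneg ha; split.
case: (ltP B0 0) => hb.
  by have := T1 ha; lia.
have [bn hbn] : exists bn : nat, B0 = bn%:Z by exists (absz B0); lia.
have [an han] : exists an : nat, A0 = an%:Z by exists (absz A0); lia.
have [a0|apos] := eqVneq A0 0.
  by split => _; [apply: S3; rewrite a0 | exact: (S5 bn a0 hbn)].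
have [b0|bpos] := eqVneq B0 0.
  split => _; last by apply: (lnd_ext addC); apply: (T5 an).
  apply: (lnd_ext (T1 := fun x => - der_bracket D2 D1 x)); first by move=> x; rewrite brC'.
  by apply: lnd_opp; [exact: Tadd | apply: T3; rewrite b0].
have ha' : 0 < A0 by lia.
have hb' : 0 < B0 by lia.
split => h; exfalso; first exact: S7 ha' hb' h.
case: (leP A0 B0) => hab; first exact: S6 ha' hab h.
apply: (T6 hb' (ltW hab)).
apply: (lnd_ext (T1 := fun x => - der_bracket D1 D2 x)); first by move=> x; rewrite brC.
by apply: lnd_opp => //; exact: Tadd.
Qed.
End Grading.

Lemma witness (k : fieldType) (A : idomainType) (phi : {rmorphism k -> A})
  (n : nat) (pi : lattice n -> A -> A) (hgr : is_grading phi pi) (D : A -> A) :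
  (forall x y, D (x + y) = D x + D y) -> (exists x, D x != 0) ->
  exists m u, hom pi m u /\ D u != 0.
Proof.
move=> Dadd [x nx]; have [s hs] := decomp hgr x.
have e : D x = \sum_(m <- s) D (pi m x) by rewrite {1}hs (big_morph _ Dadd (T0 Dadd)).
case: (boolP (has (fun m => D (pi m x) != 0) s)) => [/hasP [m _ hm]|/hasPn H].
  by exists m, (pi m x); split => //; apply: (hom_pi hgr).
move: nx; rewrite e big1_seq ?eqxx // => m /H; by rewrite negbK => /eqP.
Qed.

Theorem corollary6p1
  (k : closedFieldType) (hchar : [pchar k] =i pred0)
  (A : idomainType) (phi : {rmorphism k -> A})
  (hfg : fin_gen_alg phi) (hnormal : normal_domain A)
  (n : nat) (pi : lattice n -> A -> A)
  (hgr : is_grading phi pi) (heff : effective_grading pi)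
  (D1 D2 : A -> A)
  (hD1 : is_derivation phi D1) (hD2 : is_derivation phi D2)
  (hD1nz : exists a, D1 a != 0) (hD2nz : exists a, D2 a != 0)
  (hft1 : fiber_type pi D1) (hft2 : fiber_type pi D2) :
  locally_nilpotent (der_add D1 D2) <-> locally_nilpotent (der_bracket D1 D2).
Proof.
case: hft1 => [[e1 hh1] [lnd1 fib1]]; case: hft2 => [[e2 hh2] [lnd2 fib2]].
have [mu1 [u1 [hu1 hDu1]]] := witness hgr (Dadd hD1) hD1nz.
have [mu2 [u2 [hu2 hDu2]]] := witness hgr (Dadd hD2) hD2nz.
exact: (final hgr hchar hD1 hD2 hh1 hh2 fib1 fib2 lnd1 lnd2 hu1 hu2 hDu1 hDu2).
Qed.
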